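(* Let $S$ be a finite semigroup and $J$ a regular $\mathscr J$-class of $S$ such that for any two distinct $\mathscr L$-classes $L,L'$ of $J$ there is an $\mathscr R$-class $R$ of $J$ such that exactly one of $R\cap L$ and $R\cap L'$ contains an idempotent. Then, for any right $G_J$-set $X$, the Green's congruence with respect to $e_J$ on $X\otimes_{G_J}R_J$ is the equality relation.
   Context: Semigroups act on the right; $e_J\in J$ is a fixed idempotent, $G_J$ its maximal subgroup, $R_J$ its $\mathscr R$-class, a partial $S$-set via $r\cdot s=rs$ if $rs\in R_J$, undefined otherwise. For a right $G_J$-set $X$, $X\otimes_{G_J}R_J$ is the set of orbits of $X\times R_J$ under $(x,r)g=(xg,g^{-1}r)$, orbits written $x\otimes r$, with partial right $S$-action $(x\otimes r)s=x\otimes rs$ if $rs\in R_J$ and undefined otherwise. The Green's congruence with respect to $e_J$ on a partial $S$-set $\Lambda$ is $\alpha\sim\beta$ iff for all $s\in S$, $\alpha se_J$ and $\beta se_J$ are both undefined or both defined and equal. *)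

(* Defs.v *)
(* Green's relations are defined via S^1. *)
From mathcomp Require Import all_boot.
Set Implicit Arguments. Unset Strict Implicit. Unset Printing Implicit Defensive.

Section Green.
Variables (S : Type) (mul : S -> S -> S).

Definition in_rideal (a b : S) : Prop := a = b \/ exists s, a = mul b s.
Definition in_lideal (a b : S) : Prop := a = b \/ exists s, a = mul s b.
Definition in_ideal (a b : S) : Prop :=
  a = b \/ (exists s, a = mul s b) \/ (exists t, a = mul b t)
  \/ exists s t, a = mul (mul s b) t.

Definition Rrel (a b : S) : Prop := in_rideal a b /\ in_rideal b a.
Definition Lrel (a b : S) : Prop := in_lideal a b /\ in_lideal b a.
Definition Hrel (a b : S) : Prop := Rrel a b /\ Lrel a b.
Definition Jrel (a b : S) : Prop := in_ideal a b /\ in_ideal b a.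

Definition idem_elt (e : S) : Prop := mul e e = e.
Definition regular_elt (a : S) : Prop := exists x, mul (mul a x) a = a.

Definition regular_Jclass (j0 : S) : Prop :=
  forall a, Jrel a j0 -> regular_elt a.

Definition contains_idem_RL (c a : S) : Prop :=
  exists f, idem_elt f /\ Rrel f c /\ Lrel f a.

Definition Lclasses_separated (j0 : S) : Prop :=
  forall a b, Jrel a j0 -> Jrel b j0 -> ~ Lrel a b ->
    exists c, Jrel c j0 /\
      ((contains_idem_RL c a /\ ~ contains_idem_RL c b) \/
       (~ contains_idem_RL c a /\ contains_idem_RL c b)).

(* G_J = H-class of e (maximal subgroup), R_J = R-class of e. *)
(* A right G_J-set: act : X -> S -> X, only its values on G_J matter. *)
Definition right_GJ_set (e : S) (X : Type) (act : X -> S -> X) : Prop :=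
  (forall x, act x e = x) /\
  (forall x g h, Hrel g e -> Hrel h e -> act (act x g) h = act x (mul g h)).

(* Equality in X ⊗_{G_J} R_J of the orbits x ⊗ r and x' ⊗ r' :
   (x', r') = (x g, g^{-1} r) for some g in G_J, with inverse gi in G_J. *)
Definition tensor_eq (e : S) (X : Type) (act : X -> S -> X)
  (x : X) (r : S) (x' : X) (r' : S) : Prop :=
  exists g gi, Hrel g e /\ Hrel gi e /\ mul g gi = e /\ mul gi g = e /\
    x' = act x g /\ r' = mul gi r.

(* ((x ⊗ r) s) e_J is defined iff r s ∈ R_J and (r s) e_J ∈ R_J; its value is
   x ⊗ (r s) e_J. *)
Definition tdef (e r s : S) : Prop := Rrel (mul r s) e /\ Rrel (mul (mul r s) e) e.

Definition green_cong (e : S) (X : Type) (act : X -> S -> X)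
  (x : X) (r : S) (x' : X) (r' : S) : Prop :=
  forall s,
    (tdef e r s <-> tdef e r' s) /\
    (tdef e r s -> tdef e r' s ->
       tensor_eq e act x (mul (mul r s) e) x' (mul (mul r' s) e)).

End Green.

(* Main.v *)
Require Import Defs.
From mathcomp Require Import all_boot zify.
From Stdlib Require Import Classical.
Set Implicit Arguments. Unset Strict Implicit.

Section Pw.
Variables (S : finType) (mul : S -> S -> S).
Hypothesis mulA : forall a b c, mul a (mul b c) = mul (mul a b) c.

Fixpoint pw (n : nat) (x : S) : S :=
  match n with 0 => x | n'.+1 => mul x (pw n' x) end.

Lemma pw_add a b x : mul (pw a x) (pw b x) = pw (a + b).+1 x.
Proof. elim: a => [//|a IH] /=. by rewrite -mulA IH. Qed.

Lemma pwS' n x : pw n.+1 x = mul (pw n x) x.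
Proof. elim: n => [//|n IH]. change (mul x (pw n.+1 x) = mul (pw n.+1 x) x). by rewrite {1}IH mulA. Qed.

Lemma pw_shift i j x : pw i x = pw j x -> forall m, pw (m + i) x = pw (m + j) x.
Proof. move=> H; elim=> [//|m IH]. by rewrite !addSn /= IH. Qed.

Lemma pw_idem x : exists k, mul (pw k x) (pw k x) = pw k x.
Proof.
have : ~~ injectiveb (fun k : 'I_(#|S|).+1 => pw k x).
  apply/negP => /injectiveP Hi. have := @leq_card _ S _ Hi. by rewrite card_ord ltnn.
case/injectivePn => i [j] Hij Heq.
have [i0 [d [Hd Hp]]] : exists i0 d, 0 < d /\ pw i0 x = pw (i0 + d) x.
  case: (ltngtP i j) => H.
  - exists i, (j - i). split; first lia. by rewrite Heq; congr pw; lia.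
  - exists j, (i - j). split; first lia. by rewrite -Heq; congr pw; lia.
  - by move: Hij; rewrite (val_inj H) eqxx.
have Hs := pw_shift Hp.
have Ht : forall m t, pw (m + i0) x = pw (m + i0 + t * d) x.
  move=> m; elim=> [|t IH]; first by rewrite addn0.
  have -> : m + i0 + t.+1 * d = (m + t * d) + (i0 + d) by lia.
  by rewrite -Hs IH; congr pw; lia.
exists (d * i0 + d - 1). rewrite pw_add.
have := Ht (d * i0 + d - 1 - i0) i0.+1.
have -> : d * i0 + d - 1 - i0 + i0 = d * i0 + d - 1 by nia.
move=> ->; congr pw; nia.
Qed.

Lemma stabL a b u v p : b = mul (mul u a) v -> a = mul p b -> exists q, b = mul q a.
Proof.
move=> Hb Ha. set x := mul u p.
have Hb0 : b = mul (mul x b) v by rewrite /x {1}Hb Ha !mulA.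
have Hn : forall n, b = mul (mul (pw n x) b) (pw n v).
  elim=> [//|n IH].
  rewrite [pw n.+1 v]pwS' /= !mulA. rewrite {1}Hb0 {1}IH !mulA. done.
have [k Hk] := pw_idem x.
have HE : b = mul (pw k x) b.
  by rewrite {2}(Hn k) !mulA Hk -Hn.
case: k Hk HE => [|k] Hk HE.
  by exists u; rewrite HE /= /x Ha mulA.
exists (mul (pw k x) u). by rewrite HE pwS' /x Ha !mulA.
Qed.

End Pw.

Section G.
Variables (S : Type) (mul : S -> S -> S).
Hypothesis mulA : forall a b c, mul a (mul b c) = mul (mul a b) c.

Lemma reg_r a b : regular_elt mul b -> in_rideal mul a b -> exists t, a = mul b t.
Proof. move=> [x Hx] [->|//]. by exists (mul x b); rewrite mulA. Qed.

Lemma reg_l a b : regular_elt mul b -> in_lideal mul a b -> exists t, a = mul t b.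
Proof. move=> [x Hx] [->|//]. by exists (mul b x). Qed.

Lemma reg_J a b : regular_elt mul b -> in_ideal mul a b ->
  exists s t, a = mul (mul s b) t.
Proof.
move=> [x Hx] [->|[[s ->]|[[t ->]|//]]].
- exists (mul b x), (mul x b). by rewrite mulA Hx.
- exists s, (mul x b). by rewrite -!mulA (mulA b x b) Hx.
- exists (mul b x), t. by rewrite Hx.
Qed.

Lemma idem_reg f : idem_elt mul f -> regular_elt mul f.
Proof. by move=> H; exists f; rewrite !H. Qed.

Lemma R_reg r e : idem_elt mul e -> Rrel mul r e -> regular_elt mul r.
Proof.
move=> He [H1 H2]. have [t Ht] := reg_r (idem_reg He) H1.
case: H2 => [Eer|[w Hw]].
  apply: idem_reg. by rewrite /idem_elt -Eer.
exists w. by rewrite -Hw {1}Ht mulA He -Ht.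
Qed.
End G.

Lemma sep_lemma (S : finType) (mul : S -> S -> S)
  (mulA : forall a b c, mul a (mul b c) = mul (mul a b) c)
  (e c r1 r2 f : S) (eidem : idem_elt mul e)
  (Rr1 : Rrel mul r1 e) (Rr2 : Rrel mul r2 e)
  (creg : regular_elt mul c) (ce : exists s t, c = mul (mul s e) t)
  (fidem : idem_elt mul f) (Rfc : Rrel mul f c) (Lfr : Lrel mul f r1)
  (Hiff : forall s, tdef mul e r1 s <-> tdef mul e r2 s) :
  contains_idem_RL mul c r2.
Proof.
have ereg := idem_reg eidem.
have r1reg := R_reg mulA eidem Rr1.
have r2reg := R_reg mulA eidem Rr2.
have freg := idem_reg fidem.
have [p Hp] := reg_l freg Lfr.2.
have r1f : mul r1 f = r1 by rewrite Hp -mulA fidem.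
have [z Hz] := reg_r mulA r1reg Rr1.2.
have [T1 T2] : tdef mul e r2 (mul f z).
  apply/Hiff. rewrite /tdef mulA r1f -Hz eidem. split; split; by left.
have [t2 Ht2] := reg_r mulA ereg Rr2.1.
have [y Hy] : exists y, r2 = mul (mul r2 f) y.
  case: T1.2 => [E|[w E]].
  - exists (mul z t2). by rewrite {1}Ht2 E !mulA.
  - exists (mul (mul z w) t2). by rewrite {1}Ht2 E !mulA.
have [tc Htc] := reg_r mulA creg Rfc.1.
have [s0 [t0 Hc]] := ce.
have [t'' Ht''] := reg_r mulA r2reg Rr2.2.
have Hf : f = mul (mul s0 (mul r2 f)) (mul y (mul (mul t'' t0) tc)).
  by rewrite {1}Htc Hc {1}Ht'' {1}Hy !mulA.
have [q Hq] := stabL mulA Hf (erefl _).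
have Efy : mul f y = mul q r2 by rewrite {1}Hq -!mulA (mulA r2) -Hy.
exists (mul f y). split; [|split; split].
- by rewrite /idem_elt {1}Efy -mulA (mulA r2) -Hy -Efy.
- right. exists (mul tc y). by rewrite Htc !mulA.
- have [w Hw] := reg_r mulA freg Rfc.2. right. exists (mul f w).
  by rewrite {1}Hw mulA Efy -(mulA q) -Hq.
- right. by exists q.
- right. exists r2. by rewrite mulA -Hy.
Qed.

Theorem proposition2p9 (S : finType) (mul : S -> S -> S)
  (mulA : forall a b c, mul a (mul b c) = mul (mul a b) c)
  (j0 : S) (Jreg : regular_Jclass mul j0)
  (Hsep : Lclasses_separated mul j0)
  (e : S) (eJ : Jrel mul e j0) (eidem : idem_elt mul e)
  (X : Type) (act : X -> S -> X) (Xset : right_GJ_set mul e act) :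
  forall (x x' : X) (r r' : S), Rrel mul r e -> Rrel mul r' e ->
    green_cong mul e act x r x' r' -> tensor_eq mul e act x r x' r'.
Proof.
move=> x x' r r' Rr Rr' Hg.
have ereg := idem_reg eidem.
have rreg := R_reg mulA eidem Rr.
have r'reg := R_reg mulA eidem Rr'.
have j0reg : regular_elt mul j0 by apply: Jreg; split; left.
have [z Hz] := reg_r mulA rreg Rr.2.
have [t Ht] := reg_r mulA ereg Rr.1.
have [t' Ht'] := reg_r mulA ereg Rr'.1.
have [sa [ta Hea]] := reg_J mulA j0reg eJ.1.
have [sb [tb Hjb]] := reg_J mulA ereg eJ.2.
have JR : forall r z t, r = mul e t -> e = mul r z -> Jrel mul r j0.
  move=> r1 z1 t1 H1 H2. split; right; right; right.
  - exists sa, (mul ta t1). by rewrite H1 {1}Hea !mulA.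
  - exists sb, (mul z1 tb). by rewrite Hjb {1}H2 !mulA.
have [z' Hz'] := reg_r mulA r'reg Rr'.2.
have LL : Lrel mul r r'.
  apply: NNPP => NL.
  have [c [Jc Hc]] := Hsep _ _ (JR _ _ _ Ht Hz) (JR _ _ _ Ht' Hz') NL.
  have creg := Jreg _ Jc.
  have ce : exists s t, c = mul (mul s e) t.
    have [s1 [t1 H1]] := reg_J mulA j0reg Jc.1.
    exists (mul s1 sb), (mul tb t1). by rewrite H1 Hjb !mulA.
  case: Hc => [[[f [fi [Rf Lf]]] N]|[N [f [fi [Rf Lf]]]]]; apply: N.
  - apply: (sep_lemma mulA eidem Rr Rr' creg ce fi Rf Lf) => s; exact: (Hg s).1.
  - apply: (sep_lemma mulA eidem Rr' Rr creg ce fi Rf Lf) => s.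
    by split => H; apply/(Hg s).1.
have [u Hu] := reg_l rreg LL.2.
have T : tdef mul e r z by rewrite /tdef -Hz eidem; split; split; left.
have [g [gi [Hgg [Hgi [E1 [E2 [Ex Er]]]]]]] := (Hg z).2 T (proj1 (Hg z).1 T).
exists g, gi; do 5 split => //.
have gie : mul gi e = gi.
  case: Hgi => _ [[->|[s ->]]] _; [exact: eidem | by rewrite -mulA eidem].
have er : mul e r = r by rewrite Ht mulA eidem.
move: Er. rewrite -Hz eidem gie Hu -(mulA u r z) -Hz -mulA eidem => <-.
by rewrite -mulA er.
Qed.
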